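(* Let $r,k\geq 2$ and let $n\geq r+1$ be an integer with $n\nrightarrow(r+1)_k^r$. If a hypergraph $(V,E)$ admits a vertex colouring $V\to\{0,\dots,n-1\}$ under which no hyperedge of size $\geq r+1$ is monochromatic, then there is a colouring of the $r$-subsets of $V$ with $k+f(r)$ colours such that no hyperedge of size $\geq r+1$ is monochromatic (i.e. has all its $r$-subsets of the same colour), where $f(2)=1$, $f(3)=3$, $f(r)=4$ if $r\geq4$ and $r+1$ is prime, and $f(r)=5$ otherwise.
   Context: For $m\in\mathbb N$ write $[m]=\{0,\dots,m-1\}$. The relation $n\to(s)_k^r$ (for $n\geq s>r$, $k\geq2$) means that every colouring of the $r$-element subsets of $[n]$ with $k$ colours has a subset of $[n]$ of size $s$ all of whose $r$-subsets receive the same colour; $n\nrightarrow(s)_k^r$ is its negation. A vertex colouring makes a hyperedge monochromatic if all its vertices get the same colour. *)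

(* Defs.v *)
From mathcomp Require Import all_boot.
Set Implicit Arguments. Unset Strict Implicit. Unset Printing Implicit Defensive.

(* A colouring of the r-subsets of [n] with k colours is a map
   {set 'I_n} -> 'I_k (its values on sets of size <> r are irrelevant).
   n -> (s)^r_k : every such colouring has a set S of size s all of whose
   r-subsets get the same colour. *)
Definition ramsey_arrow (n s k r : nat) : Prop :=
  forall c : {set 'I_n} -> 'I_k,
    exists S : {set 'I_n},
      #|S| = s /\
      (forall A B : {set 'I_n}, A \subset S -> B \subset S ->
         #|A| = r -> #|B| = r -> c A = c B).

Definition has_size (V : Type) (m : nat) (X : V -> Prop) : Prop :=
  exists f : 'I_m -> V, injective f /\ (forall x, X x <-> exists i, f i = x).

Definition has_size_ge (V : Type) (m : nat) (X : V -> Prop) : Prop :=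
  exists f : 'I_m -> V, injective f /\ (forall i, X (f i)).

Definition subset_of (V : Type) (A B : V -> Prop) : Prop := forall x, A x -> B x.

Definition vmono (V C : Type) (col : V -> C) (e : V -> Prop) : Prop :=
  forall x y, e x -> e y -> col x = col y.

Definition rmono (V C : Type) (r : nat) (c : (V -> Prop) -> C) (e : V -> Prop) : Prop :=
  forall A B, subset_of A e -> subset_of B e -> has_size r A -> has_size r B -> c A = c B.

Definition fextra (r : nat) : nat :=
  if r == 2 then 1 else if r == 3 then 3 else if prime r.+1 then 4 else 5.

(* Main.v *)
Require Import Defs.
From mathcomp Require Import all_boot.
From mathcomp Require Import boolp zify.
Set Implicit Arguments. Unset Strict Implicit. Unset Printing Implicit Defensive.

Lemma count_le (T : Type) m (f1 f2 : 'I_m -> T) (P : T -> bool) :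
  injective f1 -> (forall i, exists j, f2 j = f1 i) ->
  #|[set i | P (f1 i)]| <= #|[set j | P (f2 j)]|.
Proof.
move=> inj1 H.
have /all_sig [h hP] : forall i, {j | f2 j = f1 i} by move=> i; apply: cid; exact: H.
have hinj : injective h by move=> i j e; apply: inj1; rewrite -!hP e.
rewrite -(card_imset [set i | P (f1 i)] hinj); apply: subset_leq_card.
apply/subsetP => y /imsetP [i]; rewrite !inE => Pi ->; by rewrite hP.
Qed.

Lemma fextra_gt0 r : 0 < fextra r.
Proof. rewrite /fextra; by case: ifP => //; case: ifP => //; case: ifP. Qed.

Lemma fextra_ge4 r : 4 <= r -> 4 <= fextra r.
Proof.
move=> h; rewrite /fextra; case: eqP => [e|_]; first by rewrite e in h.
case: eqP => [e|_]; first by rewrite e in h. by case: ifP.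
Qed.

Lemma fextra3 : fextra 3 = 3. Proof. by []. Qed.

Lemma fib2 (T : finType) m (f : 'I_m -> T) :
  (forall i, exists j, j != i /\ f j = f i) -> 2 * #|[set f i | i : 'I_m]| <= m.
Proof.
move=> h.
apply: (@leq_trans (\sum_(i : 'I_m) 1)); last by rewrite sum1_card card_ord.
rewrite (partition_big f (fun a => a \in [set f i | i : 'I_m])) /=; last first.
  by move=> i _; apply/imsetP; exists i.
rewrite mulnC -sum_nat_const; apply: leq_sum => a /imsetP [i _ ->].
have [j [nji eji]] := h i.
rewrite (bigD1 i) //= (bigD1 j) /=; last by rewrite eji eqxx nji.
by rewrite addnA leq_addr.
Qed.

Lemma sub_setD1 (T : finType) (S A : {set T}) m :
  A \subset S -> #|S| = m.+1 -> #|A| = m -> exists2 a, a \in S & A = S :\ a.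
Proof.
move=> sAS cS cA.
case: (set_0Vmem (S :\: A)) => [e|[a]].
  have : S \subset A by rewrite -setD_eq0 e.
  by move/subset_leq_card; rewrite cS cA ltnn.
rewrite inE => /andP [naA aS]; exists a => //.
apply/eqP; rewrite eqEcard; apply/andP; split.
  apply/subsetP => x xA; rewrite !inE (subsetP sAS) // andbT.
  by apply: contraNneq naA => <-.
have : #|S :\ a| = m by move: (cardsD1 a S); rewrite aS cS add1n => -[].
by move=> ->; rewrite cA.
Qed.

Section Main.
Variables (r k n : nat) (V : Type) (col : V -> 'I_n) (c0 : {set 'I_n} -> 'I_k).

Definition img (A : V -> Prop) : {set 'I_n} :=
  [set a | `[< exists x, A x /\ col x = a >]].
Definition enumP (A : V -> Prop) (f : 'I_r -> V) :=
  injective f /\ (forall x, A x <-> exists i, f i = x).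
Definition cntA (A : V -> Prop) : nat :=
  match pselect (exists f, enumP A f) with
  | left H => #|[set i | Some (col (proj1_sig (cid H) i)) == [pick a in img A]]|
  | right _ => 0 end.
Definition codeN t m :=
  (if (r == 3) && odd t then 2 else 2 * odd t + odd m) %% fextra r.
Definition code A : 'I_(fextra r) :=
  Ordinal (ltn_pmod (codeN #|img A| (cntA A)) (fextra_gt0 r)).
Definition colr (A : V -> Prop) : 'I_(k + fextra r) :=
  if #|img A| == r then lshift (fextra r) (c0 (img A)) else rshift k (code A).

Lemma cntA_enum A f : enumP A f ->
  cntA A = #|[set i | Some (col (f i)) == [pick a in img A]]|.
Proof.
move=> ef; rewrite /cntA; case: pselect => [H|]; last by move=> []; exists f.
case: (cid H) => f2 ef2 /=.
have key : forall f1 f3, enumP A f1 -> enumP A f3 -> forall i, exists j, f3 j = f1 i.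
  move=> f1 f3 [i1 h1] [i3 h3] i; apply/h3/h1; by exists i.
apply/eqP; rewrite eqn_leq; apply/andP; split.
  apply: (@count_le V r f2 f (fun x => Some (col x) == [pick a in img A])); [exact: (proj1 ef2)|exact: key].
apply: (@count_le V r f f2 (fun x => Some (col x) == [pick a in img A])); [exact: (proj1 ef)|exact: key].
Qed.


Definition child (g : 'I_r.+1 -> V) (j : 'I_r.+1) : V -> Prop :=
  fun x => exists i : 'I_r, g (lift j i) = x.

Lemma enum_child g j : injective g -> enumP (child g j) (g \o lift j).
Proof.
move=> ig; split; first by move=> a b /= /ig /lift_inj.
by move=> x; split.
Qed.

Lemma lift_set (j : 'I_r.+1) : [set lift j i | i : 'I_r] = [set~ j].
Proof.
apply/setP => x; rewrite !inE; apply/imsetP/idP => [[i _ ->]|].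
  by rewrite eq_sym neq_lift.
rewrite eq_sym => /unlift_some [i -> _]; by exists i.
Qed.

Lemma card_lift (j : 'I_r.+1) (Q : pred 'I_r.+1) :
  #|[set i : 'I_r | Q (lift j i)]| = #|[set i | Q i]| - Q j.
Proof.
have -> : #|[set i : 'I_r | Q (lift j i)]| = #|[set i | Q i] :\ j|.
  rewrite -(card_imset _ (@lift_inj _ j)); apply: eq_card => x; rewrite !inE; apply/imsetP/idP => [[i]|].
    by rewrite inE => Qi ->; rewrite eq_sym neq_lift.
  case/andP; rewrite eq_sym => /unlift_some [i -> _] Qi; exists i => //; by rewrite inE.
by rewrite (cardsD1 j [set i | Q i]) inE addKn.
Qed.

Definition J (g : 'I_r.+1 -> V) := [set col (g i) | i : 'I_r.+1].

Lemma img_child g j : img (child g j) = [set col (g (lift j i)) | i : 'I_r].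
Proof.
apply/setP => a; rewrite inE; apply/asboolP/imsetP => [[x [[i <-] <-]]|[i _ ->]].
  by exists i.
by exists (g (lift j i)); split => //; exists i.
Qed.

Lemma img_child2 g j : img (child g j) = [set col (g i) | i in [set~ j]].
Proof. by rewrite img_child -lift_set -imset_comp. Qed.

Lemma img_child_partner g j : (exists i, i != j /\ col (g i) = col (g j)) ->
  img (child g j) = J g.
Proof.
move=> [i0 [ne e]]; rewrite img_child2; apply/setP => a.
apply/imsetP/imsetP => [[i _ ->]|[i _ ->]]; first by exists i.
case: (eqVneq i j) => [->|nij]; first by exists i0; rewrite ?inE.
by exists i; rewrite ?inE.
Qed.

Lemma img_child_single g j : (forall i, i != j -> col (g i) != col (g j)) ->
  img (child g j) = J g :\ col (g j).
Proof.
move=> h; rewrite img_child2 /J; apply/setP => a; rewrite inE.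
apply/imsetP/andP => [[i]|[na /imsetP [i _ ea]]].
  move=> nij ->; rewrite in_setC1 in nij; split.
    by rewrite in_set1 (h i nij).
  by apply/imsetP; exists i.
exists i; last exact: ea; rewrite in_setC1; apply/eqP => eij; move: na; by rewrite ea eij !inE eqxx.
Qed.

Lemma cnt_child g j : injective g ->
  cntA (child g j) = #|[set i | Some (col (g i)) == [pick a in img (child g j)]]|
                      - (Some (col (g j)) == [pick a in img (child g j)]).
Proof.
move=> ig; rewrite (cntA_enum (enum_child j ig)) /=.
exact: (card_lift j (fun i => Some (col (g i)) == [pick a in img (child g j)])).
Qed.

Lemma codeN_id t m : 3 <= r -> t < r ->
  codeN t m = if (r == 3) && odd t then 2 else 2 * odd t + odd m.
Proof.
move=> r3 tr; rewrite /codeN modn_small //; case: eqP => [r3e|r3n] /=.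
  rewrite r3e /fextra /=; by case: (odd t); case: (odd m).
apply: (@leq_trans 4); first by case: (odd t); case: (odd m).
apply: fextra_ge4; lia.
Qed.

Lemma codes_diff s m1 m2 : 3 <= r -> s.+1 < r -> codeN s.+1 m1 != codeN s m2.
Proof.
move=> r3 sr; rewrite !codeN_id //; last exact: ltnW.
rewrite oddS; case: (r == 3); case: (odd s); case: (odd m1); by case: (odd m2).
Qed.

Lemma codes_diff2 t m : 3 <= r -> t < r -> ~~ ((r == 3) && odd t) ->
  codeN t m.+1 != codeN t m.
Proof.
move=> r3 tr h; rewrite !codeN_id // (negbTE h) oddS.
by case: (odd t); case: (odd m).
Qed.

Lemma colr_r A : #|img A| = r -> (colr A : nat) < k.
Proof. by move=> e; rewrite /colr e eqxx /=. Qed.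

Lemma colr_nr A : #|img A| != r -> (colr A : nat) = k + codeN #|img A| (cntA A).
Proof. by move=> h; rewrite /colr (negbTE h) /= /codeN modn_mod. Qed.

Hypothesis r2 : 2 <= r.
Hypothesis c0good : forall S : {set 'I_n}, #|S| = r.+1 ->
  exists A B : {set 'I_n}, A \subset S /\ B \subset S /\ #|A| = r /\ #|B| = r /\ c0 A <> c0 B.

Lemma key g : injective g -> (exists i1 i2, col (g i1) != col (g i2)) ->
  exists j1 j2, colr (child g j1) <> colr (child g j2).
Proof.
move=> ig [i1 [i2 ne12]].
have inJ : forall i, col (g i) \in J g by move=> i; apply/imsetP; exists i.
have tge2 : 2 <= #|J g|.
  have := cards2 (col (g i1)) (col (g i2)); rewrite ne12 => <-.
  apply: subset_leq_card; apply/subsetP => x; rewrite !inE => /orP [] /eqP ->; exact: inJ.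
have tle : #|J g| <= r.+1.
  by rewrite (leq_trans (leq_imset_card _ _)) // card_ord.
pose P j := exists i, i != j /\ col (g i) = col (g j).
case: (pselect (exists j, P j)) => [[j1 Pj1]|noP].
  have i1J : img (child g j1) = J g := img_child_partner Pj1.
  have tler : #|J g| <= r.
    by rewrite -i1J img_child (leq_trans (leq_imset_card _ _)) // card_ord.
  case: (pselect (exists j, ~ P j)) => [[j2 nPj2]|allP].
    have s2 : forall i, i != j2 -> col (g i) != col (g j2).
      move=> i nij; apply/eqP => e; apply: nPj2; by exists i.
    have i2J := img_child_single s2.
    have c2 : #|img (child g j2)| = (#|J g|).-1.
      by rewrite i2J (cardsD1 (col (g j2)) (J g)) inJ.
    exists j1, j2 => e; have ev := congr1 (@nat_of_ord _) e.
    case: (eqVneq #|J g| r) => [tr|tnr].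
      have h1 : (colr (child g j1) : nat) < k by apply: colr_r; rewrite i1J.
      have h2 := colr_nr (A := child g j2); rewrite c2 tr in h2.
      move: ev; rewrite h2; last by apply/eqP; lia.
      move=> ev; move: h1; rewrite ev; lia.
    have [s ts] : exists s, #|J g| = s.+1 by exists (#|J g|).-1; lia.
    have r3 : 3 <= r by lia.
    have tlt : #|J g| < r by rewrite ltn_neqAle tnr tler.
    have n1 : #|img (child g j1)| != r by rewrite i1J.
    have n2 : #|img (child g j2)| != r by rewrite c2; apply/eqP; lia.
    move: ev; rewrite (colr_nr n1) (colr_nr n2) i1J c2 ts /= => /addnI /eqP; apply/negP; apply: codes_diff => //; lia.
  have allJ : forall j, img (child g j) = J g.
    move=> j; apply: img_child_partner; case: (pselect (P j)) => // h.
    exfalso; apply: allP; by exists j.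
  have t2 : 2 * #|J g| <= r.+1.
    apply: (@fib2 _ _ (fun i => col (g i))) => i.
    case: (pselect (P i)) => [[j [nji eji]]|h]; first by exists j.
    exfalso; apply: allP; by exists i.
  have tr : #|J g| < r by lia.
  have r3 : 3 <= r by lia.
  have cntj : forall j, cntA (child g j) =
    #|[set i | Some (col (g i)) == [pick a in J g]]| - (Some (col (g j)) == [pick a in J g]).
    by move=> j; rewrite cnt_child // allJ.
  have ncol : forall j, #|img (child g j)| != r by move=> j; rewrite allJ neq_ltn tr.
  move: cntj; case: pickP => [a aJ|nJ]; last first.
    have : #|J g| = 0 by apply: eq_card0 => x; exact: nJ.
    lia.
  move=> cntj.
  have [ja _ eja] := imsetP aJ.
  have [jb njb] : exists jb, col (g jb) != a.
    case: (eqVneq (col (g i1)) a) => [e1|n1]; last by exists i1.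
    by exists i2; rewrite -e1 eq_sym.
  set M := #|[set i | Some (col (g i)) == Some a]| in cntj.
  have M0 : 0 < M.
    rewrite card_gt0; apply/set0Pn; exists ja; by rewrite inE eja.
  have [M' eM] : exists M', M = M'.+1 by exists M.-1; lia.
  exists ja, jb => e; have := congr1 (@nat_of_ord _) e.
  have nS : (Some (col (g jb)) == Some (col (g ja))) = false.
    by rewrite -eja; apply/negbTE; apply: contra njb => /eqP [->].
  rewrite !colr_nr // !cntj eja eqxx /= nS eM !allJ /= subn0 subn1 /=.
  move=> /addnI /eqP; apply/negP; rewrite eq_sym; apply: codes_diff2 => //.
  apply/negP => /andP [/eqP r3e odt].
  have : #|J g| = 2 by lia.
  by move=> h; rewrite h in odt.
have single : forall j i, i != j -> col (g i) != col (g j).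
  move=> j i nij; apply/eqP => e; apply: noP; exists j, i; by [].
have imgc : forall j, img (child g j) = J g :\ col (g j).
  by move=> j; apply: img_child_single; exact: single j.
have cJ : #|J g| = r.+1.
  rewrite /J card_imset ?card_ord // => a b e.
  case: (eqVneq b a) => [->|nba] //.
  by move: (single a b nba); rewrite e eqxx.
have cc : forall j, #|img (child g j)| = r.
  move=> j; rewrite imgc; move: (cardsD1 (col (g j)) (J g)).
  by rewrite cJ inJ add1n => -[].
have [A [B [sA [sB [cA [cB ne]]]]]] := c0good cJ.
have [a aJ eA] := sub_setD1 sA cJ cA.
have [b bJ eB] := sub_setD1 sB cJ cB.
have [ja _ eja] := imsetP aJ.
have [jb _ ejb] := imsetP bJ.
exists ja, jb; rewrite /colr !cc eqxx !imgc -eja -ejb -eA -eB.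
by move/lshift_inj.
Qed.

End Main.

Lemma reduce_rm (r k n : nat) (V : Type) (col : V -> 'I_n) (c0 : {set 'I_n} -> 'I_k)
  (e : V -> Prop) (g : 'I_r.+1 -> V) :
  2 <= r ->
  (forall S : {set 'I_n}, #|S| = r.+1 ->
    exists A B : {set 'I_n}, A \subset S /\ B \subset S /\ #|A| = r /\ #|B| = r /\ c0 A <> c0 B) ->
  injective g -> (forall i, e (g i)) -> (exists i1 i2, col (g i1) != col (g i2)) ->
  ~ rmono r (@colr r k n V col c0) e.
Proof.
move=> r2 hc0 ig ge hd rm.
have [j1 [j2 ne]] := key r2 hc0 ig hd.
apply: ne; apply: rm.
- by move=> x [i <-].
- by move=> x [i <-].
- by exists (g \o lift j1); exact: enum_child.
- by exists (g \o lift j2); exact: enum_child.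
Qed.

Unset Implicit Arguments.

Theorem theorem4p3 (r k n : nat) (V : Type) (E : (V -> Prop) -> Prop) :
  2 <= r -> 2 <= k -> r.+1 <= n -> ~ ramsey_arrow n r.+1 k r ->
  (exists col : V -> 'I_n,
      forall e, E e -> has_size_ge r.+1 e -> ~ vmono col e) ->
  exists c : (V -> Prop) -> 'I_(k + fextra r),
    forall e, E e -> has_size_ge r.+1 e -> ~ rmono r c e.
Proof.
move=> r2 k2 rn nram [col hcol].
have [c0 hc0] : exists c0 : {set 'I_n} -> 'I_k, forall S : {set 'I_n},
    ~ (#|S| = r.+1 /\ (forall A B : {set 'I_n}, A \subset S -> B \subset S ->
         #|A| = r -> #|B| = r -> c0 A = c0 B)).
  case: (pselect (exists c0 : {set 'I_n} -> 'I_k, forall S : {set 'I_n},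
    ~ (#|S| = r.+1 /\ (forall A B : {set 'I_n}, A \subset S -> B \subset S ->
         #|A| = r -> #|B| = r -> c0 A = c0 B)))) => // h.
  exfalso; apply: nram => c.
  case: (pselect (exists S : {set 'I_n}, #|S| = r.+1 /\ (forall A B : {set 'I_n},
     A \subset S -> B \subset S -> #|A| = r -> #|B| = r -> c A = c B))) => // h'.
  exfalso; apply: h; exists c => S hS; apply: h'; by exists S.
have c0good : forall S : {set 'I_n}, #|S| = r.+1 ->
    exists A B : {set 'I_n}, A \subset S /\ B \subset S /\ #|A| = r /\ #|B| = r /\ c0 A <> c0 B.
  move=> S cS.
  case: (pselect (exists A B : {set 'I_n}, A \subset S /\ B \subset S /\ #|A| = r /\ #|B| = r /\ c0 A <> c0 B)) => // hn.
  exfalso; apply: (hc0 S); split => // A B sA sB cA cB.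
  case: (pselect (c0 A = c0 B)) => // hne; exfalso; apply: hn; by exists A, B.
exists (@colr r k n V col c0) => e Ee [f [injf fe]].
have nv := hcol e Ee (ex_intro _ f (conj injf fe)).
have [x [y [ex [ey nxy]]]] : exists x y, e x /\ e y /\ col x <> col y.
  case: (pselect (exists x y, e x /\ e y /\ col x <> col y)) => // h.
  exfalso; apply: nv => x y ex ey; case: (pselect (col x = col y)) => // h2.
  exfalso; apply: h; by exists x, y.
have [z [ez nz]] : exists z, e z /\ col z <> col (f ord0).
  case: (pselect (col x = col (f ord0))) => [h|h]; last by exists x.
  exists y; split => //; by rewrite -h => /esym.
case: (pselect (exists i, col (f i) <> col (f ord0))) => [[i fi]|allc].
  apply: (reduce_rm r2 c0good injf fe); exists i, ord0; exact/eqP.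
have nzi : ~ (exists i, f i = z).
  move=> [i fi]; apply: allc; exists i; by rewrite fi.
pose g := fun i : 'I_r.+1 => if i == ord0 then z else f i.
have ig : injective g.
  move=> i j; rewrite /g.
  case: (eqVneq i ord0) => [->|ni]; case: (eqVneq j ord0) => [->|nj] //.
  - by move=> h; exfalso; apply: nzi; exists j.
  - by move=> h; exfalso; apply: nzi; exists i.
  - exact: injf.
apply: (reduce_rm (g := g) r2 c0good ig).
- by move=> i; rewrite /g; case: (i == ord0).
- have nm : (@ord_max r == ord0) = false.
    by apply/negbTE; apply/eqP => /(congr1 (@nat_of_ord _)) /=; lia.
  exists ord0, ord_max; rewrite /g eqxx nm.
  apply/eqP => h; apply: nz; rewrite h.
  case: (pselect (col (f ord_max) = col (f ord0))) => // h2.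
  exfalso; apply: allc; by exists ord_max.
Qed.
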